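(* Let $d\ge1$, $\mathcal{X}=\mathbb{R}^d$, starting point $x_0=\mathbf{0}$, and $0<\mu\le L$. There exists a sequence of differentiable functions $f_1,\dots,f_T:\mathbb{R}^d\to[0,\infty)$, each satisfying $\frac{\mu}{2}\|y-x\|^2\le f_t(y)-f_t(x)-\langle\nabla f_t(x),y-x\rangle\le\frac{L}{2}\|y-x\|^2$ for all $x,y$, such that the OMGD algorithm with $K=\lceil\frac{L+\mu}{2\mu}\ln4\rceil$ satisfies $$\frac{C_{\mathcal{A}_o}}{C_{\mathsf{OPT}}}\ge 1+\frac{L+1}{4\mu}+\frac{L+1}{8}.$$
   Context: Quadratic-switching cost of $(y_1,\dots,y_T)$ with $y_0=x_0$: $\sum_{t=1}^T\big(f_t(y_t)+\frac12\|y_t-y_{t-1}\|^2\big)$; $C_{\mathsf{OPT}}$ is its minimum over all sequences. The OMGD algorithm with parameter $K$ produces $x_1=x_0$ and, for $t=2,\dots,T$: $z_t^{(0)}=x_{t-1}$, $z_t^{(k)}=\Pi_{\mathcal{X}}\big(z_t^{(k-1)}-\frac1L\nabla f_{t-1}(z_t^{(k-1)})\big)$ for $k=1,\dots,K$, and $x_t=z_t^{(K)}$ ($\Pi_{\mathcal{X}}$ is Euclidean projection, here the identity). $C_{\mathcal{A}_o}$ is the quadratic-switching cost of $(x_1,\dots,x_T)$. *)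

(* Defs.v *)
From HB Require Import structures.
From mathcomp Require Import all_boot all_order all_algebra.
From mathcomp Require Import all_classical all_reals all_analysis.
Set Implicit Arguments. Unset Strict Implicit. Unset Printing Implicit Defensive.
Import Order.TTheory GRing.Theory Num.Theory.
Import numFieldNormedType.Exports.
Local Open Scope ring_scope.

Section Defs.
Variables (R : realType) (d : nat).

Definition dotv (u v : 'rV[R]_d) : R := \sum_(i < d) u 0 i * v 0 i.
Definition sqnorm (v : 'rV[R]_d) : R := dotv v v.

Definition grad (f : 'rV[R]_d -> R) (x : 'rV[R]_d) : 'rV[R]_d :=
  \row_(i < d) ('d f x (delta_mx 0 i : 'rV[R]_d)).

Definition sc_smooth (mu L : R) (f : 'rV[R]_d -> R) : Prop :=
  forall x y : 'rV[R]_d,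
    mu / 2 * sqnorm (y - x) <= f y - f x - dotv (grad f x) (y - x)
    /\ f y - f x - dotv (grad f x) (y - x) <= L / 2 * sqnorm (y - x).

(* quadratic-switching cost of (y_1,...,y_T) with y_0 = x0; the functions
   are f 1, ..., f T (index 0 unused) *)
Definition qcost (f : nat -> 'rV[R]_d -> R) (x0 : 'rV[R]_d) (T : nat)
    (y : nat -> 'rV[R]_d) : R :=
  \sum_(1 <= t < T.+1)
     (f t (y t) + 1/2 * sqnorm (y t - (if t == 1%N then x0 else y t.-1))).

Definition COPT (f : nat -> 'rV[R]_d -> R) (x0 : 'rV[R]_d) (T : nat) : R :=
  inf [set qcost f x0 T y | y in [set: nat -> 'rV[R]_d]].

(* one (unprojected, X = R^d) gradient step with step size 1/L *)
Definition gd_step (g : 'rV[R]_d -> R) (L : R) (z : 'rV[R]_d) : 'rV[R]_d :=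
  z - L^-1 *: grad g z.

Fixpoint omgd (f : nat -> 'rV[R]_d -> R) (L : R) (K : nat) (x0 : 'rV[R]_d)
    (t : nat) : 'rV[R]_d :=
  match t with
  | 0%N => x0
  | s.+1 => match s with
            | 0%N => x0
            | _ => iter K (gd_step (f s) L) (omgd f L K x0 s)
            end
  end.

Definition COMGD (f : nat -> 'rV[R]_d -> R) (L : R) (K : nat)
    (x0 : 'rV[R]_d) (T : nat) : R :=
  qcost f x0 T (omgd f L K x0).

End Defs.

(* Main.v *)
Require Import Defs.
From HB Require Import structures.
From mathcomp Require Import all_boot all_order all_algebra.
From mathcomp Require Import all_classical all_reals all_analysis.
From mathcomp Require Import ring lra.
Import Order.TTheory GRing.Theory Num.Theory.
Import numFieldNormedType.Exports.
Local Open Scope ring_scope.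

Set Implicit Arguments. Unset Strict Implicit.
Section H.
Variables (R : realType) (d : nat).
Local Notation V := 'rV[R]_d.

Lemma is_diff_coord (x : V) i :
  is_diff x (fun N : V => N 0 i) (fun N : V => N 0 i).
Proof.
have @f : {linear V -> R}.
  by exists (fun N : V => N 0 i); do 2![eexists]; do ?[constructor];
     rewrite ?mxE// => ? *; rewrite ?mxE//; move=> ?; rewrite !mxE.
rewrite (_ : (fun _ => _) = f) //.
apply: DiffDef; first exact/linear_differentiable/coord_continuous.
by rewrite diff_lin //; apply: coord_continuous.
Qed.

Lemma is_diff_sumI n (F dF : 'I_n -> V -> R) (x : V) :
  (forall i, is_diff x (F i) (dF i)) -> is_diff x (\sum_i F i) (\sum_i dF i).
Proof.
move=> H.
apply: (@big_ind2 _ _ (fun f df => is_diff x f df)) => //.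
  exact: (is_diff_cst (0:R) x).
by move=> f1 f2 g1 g2 h1 h2; apply: is_diffD.
Qed.

Definition qf (c : R) (a : V) : V -> R :=
  (c / 2) *: \sum_(i < d) ((fun N : V => N 0 i) - cst (a 0 i)) ^+ 2.

Lemma qfE c a x : qf c a x = c / 2 * sqnorm (x - a).
Proof.
rewrite /qf /sqnorm /dotv /=. 
rewrite fct_sumE.
rewrite /=; congr (_ * _); apply: eq_bigr => i _; rewrite !mxE /= expr2.
by []. Qed.

Lemma qf_isdiff c a x : is_diff x (qf c a) (fun v => c * dotv (x - a) v).
Proof.
have h := (is_diffZ (c/2) (@is_diff_sumI d _ _ x (fun i => is_diffX 1 (is_diffB (is_diff_coord x i) (is_diff_cst (a 0 i) x))))).
apply: is_diff_eq.
apply/funext => v /=; rewrite fct_sumE /dotv.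
transitivity (c/2 * \sum_(i<d) (2 * (x 0 i - a 0 i) * (v 0 i - 0))); first by [].
rewrite !mulr_sumr; apply: eq_bigr => i _ /=; rewrite !mxE subr0.
by field.
Qed.

Lemma qf_diff c a x : differentiable (qf c a) x.
Proof. exact: (@ex_diff _ _ _ _ _ _ _ (qf_isdiff c a x)). Qed.

Lemma dotv_delta (u : V) j : dotv u (delta_mx 0 j) = u 0 j.
Proof.
rewrite /dotv (bigD1 j) //= big1 ?addr0; first by rewrite mxE !eqxx mulr1.
by move=> i /negbTE ij; rewrite mxE ij andbF mulr0.
Qed.

Lemma grad_qf c a x : grad (qf c a) x = c *: (x - a).
Proof.
apply/rowP => j; rewrite !mxE.
rewrite (@diff_val _ _ _ _ _ _ _ (qf_isdiff c a x)) dotv_delta !mxE.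
by [].
Qed.

Lemma qf_id c a x y :
  qf c a y - qf c a x - dotv (grad (qf c a) x) (y - x) = c / 2 * sqnorm (y - x).
Proof.
rewrite grad_qf !qfE /sqnorm /dotv !mulr_sumr -!sumrB; apply: eq_bigr => i _.
by rewrite !mxE; field.
Qed.

Lemma sqnorm_ge0 (u : V) : 0 <= sqnorm u.
Proof. by apply: sumr_ge0 => i _; rewrite -expr2 sqr_ge0. Qed.

Lemma qf_sc mu L c a : mu <= c -> c <= L -> sc_smooth mu L (qf c a).
Proof.
move=> h1 h2 x y; rewrite qf_id; have := sqnorm_ge0 (y - x); split; nra.
Qed.

Lemma qf_ge0 c a x : 0 <= c -> 0 <= qf c a x.
Proof. move=> hc; rewrite qfE; have := sqnorm_ge0 (x - a); nra. Qed.

Lemma sqnormZ k (u : V) : sqnorm (k *: u) = k ^+ 2 * sqnorm u.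
Proof. rewrite /sqnorm /dotv mulr_sumr; apply: eq_bigr => i _; rewrite !mxE; ring. Qed.

Lemma iter_gd (mu L : R) (e : V) k : 0 < L ->
  iter k (gd_step (qf mu e) L) 0 = (1 - (1 - mu / L) ^+ k) *: e.
Proof.
move=> hL; elim: k => [|k IH]; first by rewrite /= expr0 subrr scale0r.
rewrite iterS IH /gd_step grad_qf; apply/rowP => j; rewrite !mxE exprS.
by field; apply/negP => /eqP; lra.
Qed.

Lemma qcost2 (f : nat -> V -> R) x0 (y : nat -> V) :
  qcost f x0 2 y = f 1%N (y 1%N) + 1/2 * sqnorm (y 1%N - x0)
                 + (f 2%N (y 2%N) + 1/2 * sqnorm (y 2%N - y 1%N)).
Proof. by rewrite /qcost big_nat_recl // big_nat_recl // big_geq //= addr0. Qed.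

Lemma sqnormN (u : V) : sqnorm (- u) = sqnorm u.
Proof. by rewrite -scaleN1r sqnormZ sqrrN expr1n mul1r. Qed.

Lemma sqnorm_coord (u : V) j : u 0 j * u 0 j <= sqnorm u.
Proof.
rewrite /sqnorm /dotv (bigD1 j) //= lerDl; apply: sumr_ge0 => i _.
by rewrite -expr2 sqr_ge0.
Qed.

End H.

Lemma rK_le (R : realType) (mu L : R) : 0 < mu -> mu <= L ->
  (1 - mu / L) ^+ `| Num.ceil ((L + mu) / (2 * mu) * ln 4) |%N <= 1 / 2.
Proof.
move=> hmu hL.
have hL0 : 0 < L by apply: lt_le_trans hL.
set z := (L + mu) / (2 * mu) * ln 4.
set K := `| Num.ceil z |%N.
have l20 : 0 <= ln (2:R) by apply: ln_ge0; lra.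
have ln4 : ln (4:R) = 2 * ln 2.
  have -> : (4:R) = 2 ^+ 2 by rewrite expr2; lra.
  by rewrite lnXn ?mulr_natl //; lra.
have z0 : 0 <= z by rewrite /z ln4; apply: mulr_ge0; [apply: divr_ge0; lra | lra].
have hK : z <= K%:R.
  rewrite /K natr_absz ger0_norm; first exact: ceil_ge.
  by rewrite ceil_ge0; lra.
set q := mu / L.
have q0 : 0 < q by apply: divr_gt0.
have q1 : q <= 1 by rewrite /q ler_pdivrMr // mul1r.
have r0 : 0 <= 1 - q by lra.
have hr : 1 - q <= expR (- q) by have := expR_ge1Dx (- q); lra.
apply: (le_trans (y := expR (- q) ^+ K)).
  by apply: lerXn2r; rewrite ?nnegrE ?expR_ge0.
rewrite -expRM_natl.
have hzq : z * q = (1 + q) * ln 2.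
  rewrite /z /q ln4; field; apply/andP; split; apply/negP => /eqP; lra.
have hKq : ln 2 <= K%:R * q.
  have : z * q <= K%:R * q by apply: ler_wpM2r; lra.
  rewrite hzq; nra.
apply: (le_trans (y := expR (- ln 2))).
  by rewrite ler_expR; lra.
rewrite expRN lnK ?posrE //; lra.
Qed.


Lemma ar_hs (R : realType) (r : R) : r <= 1/2 -> 1/2 <= 1 - r.
Proof. lra. Qed.

Lemma ar_ge0 (R : realType) (a b c e : R) : 0 <= a -> 0 <= b -> 0 <= c -> 0 <= e ->
  0 <= a + 1/2 * b + (c + 1/2 * e).
Proof. lra. Qed.

Lemma ar_y0 (R : realType) (mu L : R) : 0 < mu ->
  mu / 2 * ((mu / (mu + 2) - 1) ^+ 2 * 1) + 1 / 2 * ((mu / (mu + 2)) ^+ 2 * 1) +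
  (L / 2 * 0 + 1 / 2 * ((mu / (mu + 2)) ^+ 2 * 1)) = mu / (mu + 2).
Proof. move=> h; field; apply/negP => /eqP; lra. Qed.

Lemma ar_m0 (R : realType) (mu : R) : 0 < mu -> 0 < mu / (2 * (mu + 1)).
Proof. move=> h; apply: divr_gt0 => //; lra. Qed.

Lemma ar_lb (R : realType) (mu L z A B C e : R) : 0 < mu -> 0 < L ->
  (z - 1) * (z - 1) <= A -> z * z <= B -> 0 <= C -> 0 <= e ->
  mu / (2 * (mu + 1)) <= mu / 2 * A + 1 / 2 * B + (L / 2 * C + 1 / 2 * e).
Proof.
move=> hmu hL h1 h2 h3 h4.
have id : mu / 2 * ((z - 1) * (z - 1)) + 1 / 2 * (z * z) - mu / (2 * (mu + 1))
          = ((mu + 1) * z - mu) ^+ 2 / (2 * (mu + 1)).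
  field; apply/negP => /eqP; lra.
have : 0 <= ((mu + 1) * z - mu) ^+ 2 / (2 * (mu + 1)).
  apply: divr_ge0; [exact: sqr_ge0 | lra].
have : mu / 2 * ((z - 1) * (z - 1)) <= mu / 2 * A by apply: ler_wpM2l; lra.
have : L / 2 * C >= 0 by apply: mulr_ge0; lra.
lra.
Qed.

Lemma ar_final (R : realType) (mu L s P : R) : 0 < mu -> mu <= L -> 1/2 <= s ->
  0 < P -> P <= mu / (mu + 2) ->
  1 + (L + 1) / (4 * mu) + (L + 1) / 8 <= (mu / 2 + L / 2 * s ^+ 2 + s ^+ 2 / 2) / P.
Proof.
move=> hmu hL hs hP hPu.
have hL0 : 0 < L by apply: lt_le_trans hL.
have hs2 : 1/4 <= s ^+ 2 by rewrite expr2; nra.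
rewrite ler_pdivlMr //.
set t := 1 + (L + 1) / (4 * mu) + (L + 1) / 8.
have t0 : 0 < t.
  have h1 : 0 < (L + 1) / (4 * mu) by apply: divr_gt0; lra.
  have h2 : 0 < (L+1)/8 by apply: divr_gt0; lra.
  rewrite /t; lra.
apply: (le_trans (y := t * (mu / (mu + 2)))); first by apply: ler_wpM2l; lra.
have -> : t * (mu / (mu + 2)) = (mu + (L + 1) / 4 + (L + 1) * mu / 8) / (mu + 2).
  rewrite /t; field; apply/andP; split; apply/negP => /eqP; lra.
rewrite ler_pdivrMr; last lra.
have : mu / 2 + (L + 1) / 8 <= mu / 2 + L / 2 * s ^+ 2 + s ^+ 2 / 2 by nra.
have : 0 <= mu * mu by nra.
nra.
Qed.

Unset Implicit Arguments. Set Strict Implicit.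
Theorem lemma6 (R : realType) (d : nat) (mu L : R) :
  (1 <= d)%N -> 0 < mu -> mu <= L ->
  exists (T : nat) (f : nat -> 'rV[R]_d -> R),
    (1 <= T)%N /\
    (forall t, (1 <= t <= T)%N ->
       [/\ forall x, differentiable (f t) x,
           forall x, 0 <= f t x &
           sc_smooth mu L (f t)]) /\
    let K := `| Num.ceil ((L + mu) / (2 * mu) * ln 4) |%N in
    0 < COPT f 0 T /\
    COMGD f L K 0 T / COPT f 0 T >= 1 + (L + 1) / (4 * mu) + (L + 1) / 8.
Proof.
move=> hd hmu hL.
have hL0 : 0 < L by apply: lt_le_trans hL.
pose j0 : 'I_d := Ordinal hd.
pose e : 'rV[R]_d := delta_mx 0 j0.
have se : sqnorm e = 1 by rewrite /sqnorm dotv_delta mxE !eqxx.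
pose f := fun t : nat => if t == 1%N then qf mu e else qf L 0.
exists 2%N, f; split => //; split.
  move=> t _; rewrite /f; case: (t == 1%N); split => //;
    try exact: qf_diff; try (move=> x; apply: qf_ge0; lra);
    apply: qf_sc; lra.
move=> K.
have hrK := rK_le hmu hL; rewrite -/K in hrK.
have hr0 : 0 <= (1 - mu / L) ^+ K.
  apply: exprn_ge0; rewrite subr_ge0 ler_pdivrMr // mul1r //.
set s := 1 - (1 - mu / L) ^+ K.
have hs1 : 1/2 <= s by exact: ar_hs.
have hC : COMGD f L K 0 2 = mu / 2 + L / 2 * s ^+ 2 + s ^+ 2 / 2.
  rewrite /COMGD qcost2.
  have -> : omgd f L K 0 1 = 0 by [].
  have -> : omgd f L K 0 2 = iter K (gd_step (qf mu e) L) 0 by [].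
  rewrite iter_gd // -/s /f /= !qfE sub0r sqnormN !subr0 sqnormZ se.
  have -> : sqnorm (0 : 'rV[R]_d) = 0 by rewrite /sqnorm /dotv big1 // => i _; rewrite mxE mulr0.
  ring.
have sq0 : sqnorm (0 : 'rV[R]_d) = 0 by rewrite /sqnorm /dotv big1 // => i _; rewrite mxE mulr0.
have qge0 : forall y, 0 <= qcost f 0 2 y.
  move=> y; rewrite qcost2 /f /=.
  apply: ar_ge0; [exact: qf_ge0 (ltW hmu) | exact: sqnorm_ge0 | exact: qf_ge0 (ltW hL0) | exact: sqnorm_ge0].
pose y0 := fun t : nat => if t == 1%N then (mu / (mu + 2)) *: e else 0.
have hy0 : qcost f 0 2 y0 = mu / (mu + 2).
  rewrite qcost2 /f /y0 /= !qfE !subr0 sub0r.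
  have -> : (mu/(mu+2)) *: e - e = (mu/(mu+2) - 1) *: e by rewrite scalerBl scale1r.
  by rewrite sqnormN !sqnormZ se sq0 ar_y0.
have ej : e 0 j0 = 1 by rewrite mxE !eqxx.
have lbS : forall y, mu / (2 * (mu + 1)) <= qcost f 0 2 y.
  move=> y; rewrite qcost2 /f /= !qfE subr0.
  have h1 : (y 1%N 0 j0 - 1) * (y 1%N 0 j0 - 1) <= sqnorm (y 1%N - e).
    by have := sqnorm_coord (y 1%N - e) j0; rewrite [(y 1%N - e) 0 j0]mxE [(- e) 0 j0]mxE ej.
  apply: ar_lb h1 (sqnorm_coord _ _) (sqnorm_ge0 _) (sqnorm_ge0 _) => //.
have hinf_ub : COPT f 0 2 <= mu / (mu + 2).
  rewrite /COPT -hy0; apply: ge_inf; last by exists y0.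
  by exists 0 => _ [y _ <-].
have hinf_lb : mu / (2 * (mu + 1)) <= COPT f 0 2.
  rewrite /COPT; apply: lb_le_inf; first by exists (qcost f 0 2 y0), y0.
  by move=> _ [y _ <-].
have P0 : 0 < COPT f 0 2 by apply: lt_le_trans (ar_m0 hmu) hinf_lb.
split => //.
rewrite hC; exact: ar_final.
Qed.
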